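(* Let $P$ be a poset with an $\mathbb{R}$-action $\Lambda$, and let $V,W$ be interval-decomposable pfd $P$-persistence modules. If, for some $\epsilon\ge0$, there exists a $\Lambda_\epsilon$-matching between $\mathscr{B}(V)$ and $\mathscr{B}(W)$, then this same partial matching is a bottleneck $\Lambda_\epsilon$-interleaving between $V$ and $W$. Consequently, $$d^\Lambda_{\mathrm{BI}}(V,W)\le d^\Lambda_{\mathrm B}(\mathscr{B}(V),\mathscr{B}(W)).$$
   Context: Let $k$ be a field. A $P$-persistence module is a functor from the poset $P$ (as a category) to $k$-vector spaces; it is pfd if every space is finite-dimensional. An interval of $P$ is a nonempty convex and connected subset (convex: $p,q\in I$, $p\le r\le q$ imply $r\in I$; connected: any two elements are joined by a finite sequence in $I$ with consecutive ones comparable). The interval module $k_I$ is $k$ on $I$ and $0$ elsewhere, with identity maps within $I$ and zero maps otherwise. Every pfd module decomposes uniquely (up to isomorphism and permutation) into indecomposables; $\mathscr{B}(V)$ is the multiset of these summands. $V$ is interval-decomposable if all summands are interval modules; $\mathscr{B}(V)$ is then identified with a multiset of intervals. An $\mathbb{R}$-action on $P$ is a family $\{\Lambda_\epsilon\}_{\epsilon\ge0}$ of poset automorphisms with $p\le\Lambda_\epsilon(p)$, $\Lambda_0=\mathrm{id}$ and $\Lambda_\epsilon\Lambda_\zeta=\Lambda_{\epsilon+\zeta}$. Shifts and interleavings: - $V(\epsilon)_p=V_{\Lambda_\epsilon p}$ and $V(\epsilon)(p,q)=V(\Lambda_\epsilon p,\Lambda_\epsilon q)$; for a morphism $\phi$,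 $\phi(\epsilon)$ has components $\phi_{\Lambda_\epsilon p}$; - $V_{0\to\epsilon}\colon V\to V(\epsilon)$ has components $V(p,\Lambda_\epsilon p)$; - a $\Lambda_\epsilon$-interleaving is a pair $\alpha\colon V\to W(\epsilon)$, $\beta\colon W\to V(\epsilon)$ with $\beta(\epsilon)\alpha=V_{0\to2\epsilon}$ and $\alpha(\epsilon)\beta=W_{0\to2\epsilon}$; - $V$ is $\Lambda_\epsilon$-trivial if $V_{0\to\epsilon}=0$. For $A\subseteq P$ nonempty, $A^\uparrow=\{p:\exists a\in A,\ a\le p\}$ and $A^\downarrow=\{p:\exists a\in A,\ p\le a\}$; $\emptyset^\uparrow=\emptyset^\downarrow=P$. Set $\mathrm{Ex}^\Lambda_\epsilon(A)=\Lambda_\epsilon^{-1}(A)^\uparrow\cap\Lambda_\epsilon(A)^\downarrow$, with $\Lambda_\epsilon^{-1}(A)$ the preimage. A $\Lambda_\epsilon$-matching between multisets of intervals $\mathscr{A},\mathscr{C}$ is a bijection $\sigma$ between submultisets such that: - every unmatched interval $I$ has $k_I$ $\Lambda_{2\epsilon}$-trivial; - $\sigma(I)=J$ implies $I\subseteq\mathrm{Ex}^\Lambda_\epsilon(J)$ and $J\subseteq\mathrm{Ex}^\Lambda_\epsilon(I)$. A bottleneck $\Lambda_\epsilon$-interleaving between $V$ and $W$ is a bijection $\sigma$ between submultisets of $\mathscr{B}(V)$ and $\mathscr{B}(W)$ such that: - all unmatched summands are $\Lambda_{2\epsilon}$-trivial; - each $M$ and $\sigma(M)$ are $\Lambda_\epsilon$-interleaved.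 $d^\Lambda_{\mathrm{BI}}$ and $d^\Lambda_{\mathrm B}$ are the infima of $\epsilon\ge0$ admitting a bottleneck $\Lambda_\epsilon$-interleaving, resp. a $\Lambda_\epsilon$-matching ($\inf\emptyset=+\infty$). *)

(* Defs.v *)
From HB Require Import structures.
From mathcomp Require Import all_boot all_order all_algebra.
From mathcomp Require Import boolp classical_sets reals constructive_ereal ereal.
Unset Printing Implicit Defensive.
Import Order.TTheory GRing.Theory Num.Theory.
Local Open Scope ring_scope.
Local Open Scope classical_set_scope.

Section PersistenceDefs.
Context {K : fieldType} {R : realType} {dsp : Order.disp_t} {P : porderType dsp}.

Record pmod := PMod {
  pm_sp : P -> vectType K;
  pm_map : forall p q : P, (p <= q)%O -> pm_sp p -> pm_sp q }.
Arguments pm_map _ {p q}.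

Definition lin {U X : vectType K} (f : U -> X) :=
  forall (a : K) (x y : U), f (a *: x + y) = a *: f x + f y.

Definition is_pmod (V : pmod) :=
  [/\ (forall p q (h : (p <= q)%O), lin (pm_map V h)),
      (forall p (h : (p <= p)%O) x, pm_map V h x = x) &
      (forall p q r (h1 : (p <= q)%O) (h2 : (q <= r)%O) (h3 : (p <= r)%O) x,
          pm_map V h2 (pm_map V h1 x) = pm_map V h3 x)].

Definition is_morph (V W : pmod) (f : forall p, pm_sp V p -> pm_sp W p) :=
  (forall p, lin (f p)) /\
  (forall p q (h : (p <= q)%O) x, f q (pm_map V h x) = pm_map W h (f p x)).

Definition R_action (Lam : R -> P -> P) :=
  [/\ (forall e, 0 <= e -> bijective (Lam e) /\
          forall p q, (p <= q)%O = (Lam e p <= Lam e q)%O),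
      (forall e p, 0 <= e -> (p <= Lam e p)%O),
      (forall p, Lam 0 p = p) &
      (forall e z p, 0 <= e -> 0 <= z -> Lam e (Lam z p) = Lam (e + z) p)].

(** a morphism V -> W(e): components V_p -> W_{Lam e p} *)
Definition is_smorph (Lam : R -> P -> P) (e : R) (V W : pmod)
    (f : forall p, pm_sp V p -> pm_sp W (Lam e p)) :=
  (forall p, lin (f p)) /\
  (forall p q (h : (p <= q)%O) (h' : (Lam e p <= Lam e q)%O) x,
      f q (pm_map V h x) = pm_map W h' (f p x)).

Definition trivial_mod (Lam : R -> P -> P) (e : R) (V : pmod) :=
  forall p (h : (p <= Lam e p)%O) x, pm_map V h x = 0.

(** Lam_e-interleaving; V(2e) is identified with V(e)(e) using
    Lam_{2e} = Lam_e o Lam_e. *)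
Definition interleaved (Lam : R -> P -> P) (e : R) (V W : pmod) :=
  exists (al : forall p, pm_sp V p -> pm_sp W (Lam e p))
         (be : forall p, pm_sp W p -> pm_sp V (Lam e p)),
    [/\ is_smorph Lam e V W al, is_smorph Lam e W V be,
        (forall p (h : (p <= Lam e (Lam e p))%O) x,
            be (Lam e p) (al p x) = pm_map V h x) &
        (forall p (h : (p <= Lam e (Lam e p))%O) x,
            al (Lam e p) (be p x) = pm_map W h x)].

Definition is_interval (I : set P) :=
  [/\ exists p, I p,
      (forall p q r, I p -> I q -> (p <= r)%O -> (r <= q)%O -> I r) &
      (forall p q, I p -> I q -> exists s : seq P,
          [/\ forall x, x \in s -> I x, path (fun x y => x >=< y)%O p s & last p s = q])].

(** interval module k_I : K at points of I (as 'rV_1), 0 elsewhere (as 'rV_0),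
    identity within I, zero otherwise. *)
Definition interval_mod (I : set P) : pmod :=
  @PMod (fun p : P => (('rV[K]_(p \in I))%type : vectType K))
        (fun p q _ x => x *m const_mx 1).

(** internal direct-sum decomposition V ~= (+)_a M a, given by the family of
    morphisms iota a : M a -> V inducing, at every p, a linear bijection
    (+)_a (M a)_p -> V_p (only finitely many (M a)_p are nonzero). *)
Definition decomposition (V : pmod) {A : eqType} (M : A -> pmod)
    (iota : forall a p, pm_sp (M a) p -> pm_sp V p) :=
  (forall a, is_morph (M a) V (iota a)) /\
  forall p, exists s : seq A,
    [/\ uniq s,
        (forall a, a \notin s -> forall y : pm_sp (M a) p, y = 0),
        (forall v : pm_sp V p, exists x : forall a, pm_sp (M a) p,
            v = \sum_(a <- s) iota a p (x a)) &
        (forall x : forall a, pm_sp (M a) p,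
            \sum_(a <- s) iota a p (x a) = 0 -> forall a, a \in s -> x a = 0)].

Definition nonzero_mod (M : pmod) := exists p (x : pm_sp M p), x != 0.

Definition indecomposable (M : pmod) :=
  nonzero_mod M /\
  forall (N : bool -> pmod) (iota : forall b p, pm_sp (N b) p -> pm_sp M p),
    (forall b, is_pmod (N b)) -> decomposition M (A:=bool) N iota ->
    exists b, ~ nonzero_mod (N b).

(** up-/down-closures (with the convention emptyset^up = emptyset^down = P) *)
Definition upset (A : set P) : set P :=
  [set p | A = set0 \/ exists2 a, A a & (a <= p)%O].
Definition downset (A : set P) : set P :=
  [set p | A = set0 \/ exists2 a, A a & (p <= a)%O].

Definition Ex (Lam : R -> P -> P) (e : R) (A : set P) : set P :=
  upset [set p | A (Lam e p)] `&` downset (Lam e @` A).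

(** partial matchings between indexed families (multisets), given by a partial
    injection sigma : A -> option B *)
Definition partial_injection {A B : Type} (sigma : A -> option B) :=
  forall a a' b, sigma a = Some b -> sigma a' = Some b -> a = a'.

Definition matching (Lam : R -> P -> P) (e : R) {A B : Type}
    (I : A -> set P) (J : B -> set P) (sigma : A -> option B) :=
  [/\ partial_injection sigma,
      (forall a, sigma a = None -> trivial_mod Lam (2 * e) (interval_mod (I a))),
      (forall b, (forall a, sigma a <> Some b) ->
                 trivial_mod Lam (2 * e) (interval_mod (J b))) &
      (forall a b, sigma a = Some b -> I a `<=` Ex Lam e (J b) /\ J b `<=` Ex Lam e (I a))].

Definition bottleneck_interleaving (Lam : R -> P -> P) (e : R) {A B : Type}
    (M : A -> pmod) (N : B -> pmod) (sigma : A -> option B) :=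
  [/\ partial_injection sigma,
      (forall a, sigma a = None -> trivial_mod Lam (2 * e) (M a)),
      (forall b, (forall a, sigma a <> Some b) -> trivial_mod Lam (2 * e) (N b)) &
      (forall a b, sigma a = Some b -> interleaved Lam e (M a) (N b))].

(** barcode of V : the family of summands of a decomposition of V into
    indecomposables (unique up to iso and reindexing) *)
Definition indecomposable_decomposition (V : pmod) {A : eqType} (M : A -> pmod)
    (iota : forall a p, pm_sp (M a) p -> pm_sp V p) :=
  [/\ forall a, is_pmod (M a), forall a, indecomposable (M a) &
      decomposition V M iota].

Local Open Scope ereal_scope.

Definition d_B (Lam : R -> P -> P) {A B : Type} (I : A -> set P) (J : B -> set P)
    : \bar R :=
  ereal_inf [set x | exists e : R, [/\ (0 <= e)%R, x = e%:E &
                                     exists sigma, matching Lam e I J sigma]].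

Definition d_BI (Lam : R -> P -> P) (V W : pmod) : \bar R :=
  ereal_inf [set x | exists e : R, [/\ (0 <= e)%R, x = e%:E &
     exists (A B : eqType) (M : A -> pmod) (N : B -> pmod) iotaM iotaN sigma,
       [/\ indecomposable_decomposition V M iotaM,
           indecomposable_decomposition W N iotaN &
           bottleneck_interleaving Lam e M N sigma]]].

End PersistenceDefs.
Arguments pm_map {K dsp P} _ {p q}.
Arguments pmod : clear implicits.

(* Main.v *)
Require Import Defs.
From HB Require Import structures.
From mathcomp Require Import all_boot all_order all_algebra.
From mathcomp Require Import boolp classical_sets reals constructive_ereal ereal.
Import Order.TTheory GRing.Theory Num.Theory.
Local Open Scope ring_scope.
Local Open Scope classical_set_scope.

Set Implicit Arguments.

Section Mx.
Variable K : fieldType.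

Lemma mxc_entry m n (x : 'M[K]_(1,m)) i j :
  (x *m (const_mx 1 : 'M_(m,n))) i j = \sum_l x 0 l.
Proof.
rewrite !mxE; apply: eq_bigr => l _; rewrite mxE mulr1 (ord1 i) //.
Qed.

Lemma mxc_comp m k n (x : 'M[K]_(1,m)) :
  x *m (const_mx 1 : 'M_(m,k)) *m (const_mx 1 : 'M_(k,n))
  = k%:R *: (x *m const_mx 1).
Proof.
apply/matrixP => i j; rewrite mxE [in RHS]mxE mxc_entry.
under eq_bigr => l _ do rewrite mxc_entry mxE mulr1.
by rewrite sumr_const card_ord mulr_natl.
Qed.

Lemma mx_dim0 m n (x : 'M[K]_(m,n)) : n = 0%N -> x = 0.
Proof.
move=> Hn; apply/matrixP => i j; have := ltn_ord j; by rewrite {2}Hn.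
Qed.

Lemma mx_dim0r m (x : 'M[K]_(1,m)) : m = 0%N -> x = 0.
Proof. exact: mx_dim0. Qed.

Lemma mxc_id m (x : 'M[K]_(1,m)) : (m <= 1)%N -> x *m (const_mx 1 : 'M_(m,m)) = x.
Proof.
case: m x => [|[|//]] x _; first by rewrite (mx_dim0 x) // mul0mx.
apply/matrixP => i j; rewrite mxc_entry big_ord1 (ord1 i) (ord1 j) //.
Qed.

Lemma mxc_nz m n (x : 'M[K]_(1,m)) : (m <= 1)%N -> (0 < n)%N -> x != 0 ->
  x *m (const_mx 1 : 'M_(m,n)) != 0.
Proof.
case: m x => [|[|//]] x _ Hn; first by rewrite (mx_dim0 x) ?eqxx.
apply: contra => /eqP /matrixP H; apply/eqP/matrixP => i j.
have := H 0 (Ordinal Hn); rewrite mxc_entry big_ord1 !mxE (ord1 i) (ord1 j) //.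
Qed.

Lemma mx_col n (u v : 'M[K]_(1,n)) : (n <= 1)%N -> v != 0 -> exists c, u = c *: v.
Proof.
case: n u v => [|[|//]] u v _ Hv; first by rewrite (mx_dim0 v) ?eqxx in Hv.
have Hv0 : v 0 0 != 0.
  apply: contra Hv => /eqP H; apply/eqP/matrixP => i j; by rewrite (ord1 i) (ord1 j) H mxE.
exists (u 0 0 / v 0 0); apply/matrixP => i j; rewrite (ord1 i) (ord1 j) mxE.
by rewrite -mulrA mulVf // mulr1.
Qed.

End Mx.
Section IM.
Variables (K : fieldType) (dsp : Order.disp_t) (P : porderType dsp).

Lemma emb (b : bool) : b \/ ~~ b. Proof. by case: b; [left|right]. Qed.

Lemma scale_nat_id (V : lmodType K) (k : nat) (y : V) : (k = 1%N \/ y = 0) -> k%:R *: y = y.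
Proof. by case=> ->; rewrite ?scale1r ?scaler0. Qed.

Lemma lin_mxc m n : lin (fun x : 'M[K]_(1,m) => x *m (const_mx 1 : 'M_(m,n))).
Proof. by move=> a x y; rewrite mulmxDl scalemxAl. Qed.

Lemma interval_is_pmod (I : set P) : is_interval I -> is_pmod (interval_mod (K:=K) I).
Proof.
case=> _ Hconv _; split.
- move=> p q h; exact: lin_mxc.
- move=> p h x /=; exact: mxc_id (leq_b1 _).
- move=> p q r h1 h2 h3 x /=; rewrite mxc_comp; apply: scale_nat_id.
  have [Hq|Hq] := emb (q \in I); first by left; rewrite Hq.
  right; have [Hp|Hp] := emb (p \in I); last by rewrite (@mx_dim0 K 1 (p \in I) x) ?mul0mx // (negbTE Hp).
  have [Hr|Hr] := emb (r \in I); last by apply: mx_dim0; rewrite (negbTE Hr).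
  exfalso; move/negP: Hq; apply; apply/mem_set.
  exact: (Hconv p r q (set_mem Hp) (set_mem Hr) h1 h2).
Qed.

End IM.
Section Inter.
Variables (K : fieldType) (R : realType) (dsp : Order.disp_t) (P : porderType dsp).
Variables (Lam : R -> P -> P) (HLam : R_action Lam) (e : R) (He : 0 <= e).

Lemma Lam_mono p q : (p <= q)%O = (Lam e p <= Lam e q)%O.
Proof. by case: HLam => H _ _ _; case: (H e He). Qed.

Lemma exU (I J : set P) : (exists p, J p) -> I `<=` Ex Lam e J ->
  forall p, I p -> exists2 a, J (Lam e a) & (a <= p)%O.
Proof.
move=> [j0 Jj0] sub p Ip; case: (sub p Ip) => [[Hemp|//]] _.
case: HLam => H _ _ _; case: (H e He) => [[g _ gK] _].
have : [set p | J (Lam e p)] (g j0) by rewrite /= gK.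
by rewrite Hemp.
Qed.

Lemma exD (I J : set P) : (exists p, J p) -> I `<=` Ex Lam e J ->
  forall p, I p -> exists2 c, J c & (p <= Lam e c)%O.
Proof.
move=> [j0 Jj0] sub p Ip; case: (sub p Ip) => _ [Hemp|[b [c Jc <-] Hpb]].
  have : (Lam e @` J) (Lam e j0) by exists j0.
  by rewrite Hemp.
by exists c.
Qed.

Lemma scale_nat_eq (V : lmodType K) (k1 k2 : nat) (y : V) :
  ((k1 = 1%N /\ k2 = 1%N) \/ y = 0) -> k1%:R *: y = k2%:R *: y.
Proof. by case=> [[-> ->]|->]; rewrite ?scaler0. Qed.

Lemma interval_smorph (I J : set P) : is_interval I -> is_interval J ->
  I `<=` Ex Lam e J -> J `<=` Ex Lam e I ->
  is_smorph Lam e (interval_mod (K:=K) I) (interval_mod J)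
    (fun p x => x *m const_mx 1).
Proof.
move=> [neI cI _] [neJ cJ _] sIJ sJI; split.
  move=> p; exact: lin_mxc.
move=> p q h h' x /=; rewrite !mxc_comp; apply: scale_nat_eq.
have [Hp|Hp] := emb (p \in I); last first.
  by right; rewrite (@mx_dim0 K 1 (p \in I) x) ?mul0mx // (negbTE Hp).
have [Hq|Hq] := emb (Lam e q \in J); last first.
  by right; apply: mx_dim0; rewrite (negbTE Hq).
left; move/set_mem: Hp => Ip; move/set_mem: Hq => Jq.
have [a Ja hap] := exU neJ sIJ _ Ip.
have [c Ic hqc] := exD neI sJI _ Jq.
split.
- suff -> : q \in I by [].
  apply/mem_set; apply: (cI p c q Ip Ic h); by rewrite Lam_mono.
- suff -> : Lam e p \in J by [].
  apply/mem_set; apply: (cJ (Lam e a) (Lam e q) _ Ja Jq _ h'); by rewrite -Lam_mono.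
Qed.

Lemma interval_comp (I J : set P) : is_interval I -> is_interval J ->
  I `<=` Ex Lam e J ->
  forall p (h : (p <= Lam e (Lam e p))%O) (x : pm_sp (interval_mod (K:=K) I) p),
   ((x *m const_mx 1 : pm_sp (interval_mod (K:=K) J) (Lam e p)) *m const_mx 1
      : pm_sp (interval_mod (K:=K) I) (Lam e (Lam e p)))
   = pm_map (interval_mod I) h x.
Proof.
move=> [neI cI _] [neJ cJ _] sIJ p h x /=; rewrite mxc_comp; apply: scale_nat_id.
have [Hp|Hp] := emb (p \in I); last first.
  by right; rewrite (@mx_dim0 K 1 (p \in I) x) ?mul0mx // (negbTE Hp).
have [Hq|Hq] := emb (Lam e (Lam e p) \in I); last first.
  by right; apply: mx_dim0; rewrite (negbTE Hq).
left; move/set_mem: Hp => Ip; move/set_mem: Hq => Iq.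
have [a Ja hap] := exU neJ sIJ _ Ip.
have [c Jc hqc] := exD neJ sIJ _ Iq.
suff -> : Lam e p \in J by [].
apply/mem_set; apply: (cJ (Lam e a) c _ Ja Jc).
  by rewrite -Lam_mono.
by rewrite Lam_mono.
Qed.

Lemma interval_interleaved (I J : set P) : is_interval I -> is_interval J ->
  I `<=` Ex Lam e J -> J `<=` Ex Lam e I ->
  interleaved Lam e (interval_mod (K:=K) I) (interval_mod J).
Proof.
move=> HI HJ sIJ sJI.
exists (fun p x => x *m const_mx 1), (fun p x => x *m const_mx 1); split.
- exact: interval_smorph.
- exact: interval_smorph.
- exact: interval_comp.
- exact: interval_comp.
Qed.

End Inter.
Section Indec.
Variables (K : fieldType) (dsp : Order.disp_t) (P : porderType dsp).

Lemma lin0 (U X : vectType K) (f : U -> X) : lin f -> f 0 = 0.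
Proof.
move=> Hf; have H : f 0 + f 0 = f 0 + 0.
  by rewrite addr0 -[in RHS](scale1r 0) -[in RHS](addr0 (1 *: 0)) Hf scale1r.
exact: (addrI _ H).
Qed.

Lemma linZ (U X : vectType K) (f : U -> X) : lin f -> forall a x, f (a *: x) = a *: f x.
Proof. by move=> Hf a x; have := Hf a x 0; rewrite !addr0 lin0 // addr0. Qed.

Lemma constmx_nz n : (0 < n)%N -> (const_mx 1 : 'M[K]_(1,n)) != 0.
Proof.
move=> Hn; apply/eqP => /matrixP H; have := H 0 (Ordinal Hn); rewrite !mxE.
by move/eqP; rewrite oner_eq0.
Qed.

Variables (I : set P) (HI : is_interval I).
Variables (N : bool -> pmod K dsp P)
  (iota : forall b p, pm_sp (N b) p -> pm_sp (interval_mod (K:=K) I) p)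
  (Hd : decomposition (interval_mod (K:=K) I) N iota).

Let M := interval_mod (K:=K) I.

Lemma ilin b p : lin (iota b p).
Proof. by case: Hd => H _; case: (H b) => H1 _; exact: H1. Qed.

Lemma inat b p q (h : (p <= q)%O) y :
  iota b q (pm_map (N b) h y) = pm_map M h (iota b p y).
Proof. by case: Hd => H _; case: (H b) => _ H2; exact: H2. Qed.

Lemma iota0 b p : iota b p 0 = 0.
Proof. apply: lin0; exact: ilin. Qed.

Definition mkx p (yt : pm_sp (N true) p) (yf : pm_sp (N false) p) :
  forall a, pm_sp (N a) p :=
  fun a => if a as a0 return pm_sp (N a0) p then yt else yf.

Lemma sum_s p (s : seq bool) (x : forall a, pm_sp (N a) p) : uniq s ->
  (forall a, a \notin s -> forall y : pm_sp (N a) p, y = 0) ->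
  \sum_(a <- s) iota a p (x a) = iota true p (x true) + iota false p (x false).
Proof.
move=> Hu Hout.
have Z : forall a, a \notin s -> iota a p (x a) = 0.
  by move=> a Ha; rewrite (Hout a Ha (x a)) iota0.
rewrite big_uniq // big_mkcond /= big_bool /=.
by congr (_ + _); case: ifP => // /negbT /Z ->.
Qed.

Lemma D_ind2 p (yt : pm_sp (N true) p) (yf : pm_sp (N false) p) :
  iota true p yt + iota false p yf = 0 -> yt = 0 /\ yf = 0.
Proof.
case: Hd => _ /(_ p) [s [Hu Hout _ Hind]] H0.
have Hs := @sum_s p s (mkx p yt yf) Hu Hout; rewrite /= in Hs.
rewrite H0 in Hs; have := Hind (mkx p yt yf) Hs => Hx.
split.
- have [Ht|Ht] := emb (true \in s); first exact: (Hx true Ht).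
  exact: Hout.
- have [Ht|Ht] := emb (false \in s); first exact: (Hx false Ht).
  exact: Hout.
Qed.

Lemma D_inj b p (y : pm_sp (N b) p) : iota b p y = 0 -> y = 0.
Proof.
case: b y => y Hy.
- have [] // := @D_ind2 p y 0; by rewrite Hy iota0 ?addr0 ?add0r.
- have [] // := @D_ind2 p 0 y; by rewrite Hy iota0 ?addr0 ?add0r.
Qed.

Lemma D_span p (v : pm_sp M p) : exists yt yf,
  v = iota true p yt + iota false p yf.
Proof.
case: Hd => _ /(_ p) [s [Hu Hout Hspan _]].
have [x ->] := Hspan v; exists (x true), (x false); exact: sum_s.
Qed.

Definition nz b p := exists y : pm_sp (N b) p, y != 0.

Lemma nz_in b p : nz b p -> p \in I.
Proof.
move=> [y Hy]; have [//|Hp] := emb (p \in I).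
case/eqP: Hy; apply: (@D_inj b p); apply: mx_dim0; by rewrite (negbTE Hp).
Qed.

Lemma nz_some p : p \in I -> nz true p \/ nz false p.
Proof.
move=> Hp; have [yt [yf Hv]] := D_span (const_mx 1 : 'rV_(p \in I)).
have [Ht|Ht] := emb (yt == 0); last by left; exists yt.
have [Hf|Hf] := emb (yf == 0); last by right; exists yf.
have Hn : (0 < (p \in I))%N by rewrite Hp.
exfalso; move: (@constmx_nz (p \in I) Hn).
by rewrite Hv (eqP Ht) (eqP Hf) !iota0 addr0 eqxx.
Qed.

Lemma nz_notboth p : nz true p -> nz false p -> False.
Proof.
move=> [yt Ht] [yf Hf].
have Hvf : iota false p yf != 0 by apply: contra Hf => /eqP/D_inj ->.
have [c Hc] := @mx_col K (p \in I) (iota true p yt) (iota false p yf) (leq_b1 _) Hvf.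
have Hs : iota true p yt + iota false p (- c *: yf) = 0.
  have HZ : iota false p (- c *: yf) = - c *: iota false p yf.
    by apply: linZ; exact: ilin.
  by rewrite HZ scaleNr -Hc subrr.
have [H1 _] := D_ind2 Hs.
by rewrite H1 eqxx in Ht.
Qed.

Lemma nz_fwd b p q (h : (p <= q)%O) : q \in I -> nz b p -> nz b q.
Proof.
move=> Hq [y Hy]; exists (pm_map (N b) h y); apply/eqP => H0.
have Hv : iota b p y != 0 by apply: contra Hy => /eqP /D_inj ->.
have Hn : (0 < (q \in I))%N by rewrite Hq.
have := @mxc_nz K (p \in I) (q \in I) (iota b p y) (leq_b1 _) Hn Hv.
have E := @inat b p q h y; rewrite H0 iota0 /= in E.
by rewrite -E eqxx.
Qed.

Lemma nz_comp p q (h : (p <= q)%O) : p \in I -> q \in I -> (nz true p <-> nz true q).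
Proof.
move=> Hp Hq; split; first exact: (@nz_fwd true p q h Hq).
move=> Hq'; case: (@nz_some p Hp) => // Hf.
exfalso; exact: (@nz_notboth q Hq' (@nz_fwd false p q h Hq Hf)).
Qed.

Lemma nz_path s p : p \in I -> (forall x, x \in s -> I x) ->
  path (fun x y => x >=< y)%O p s -> nz true p -> nz true (last p s).
Proof.
elim: s p => [//|x s IH] p Hp Hs /= /andP [Hpx Hpath] Hn.
have Hx : x \in I by apply/mem_set; apply: Hs; rewrite inE eqxx.
apply: IH => //.
- by move=> y Hy; apply: Hs; rewrite inE Hy orbT.
- case/orP: Hpx => h; first exact: (proj1 (nz_comp _ _ h Hp Hx) Hn).
  exact: (proj2 (nz_comp _ _ h Hx Hp) Hn).
Qed.

End Indec.

Lemma interval_indec (K : fieldType) (dsp : Order.disp_t) (P : porderType dsp)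
  (I : set P) : is_interval I -> indecomposable (interval_mod (K:=K) I).
Proof.
move=> HI; split.
  case: (HI) => [[p Ip] _ _]; exists p.
  have Hn : (0 < (p \in I))%N by rewrite mem_set.
  exists (const_mx 1 : 'rV_(p \in I)); exact: constmx_nz.
move=> N iota HN Hd.
case: (pselect (nonzero_mod (N true))) => [[pt [yt Hyt]]|Hnt]; last by exists true.
case: (pselect (nonzero_mod (N false))) => [[pf [yf Hyf]]|Hnf]; last by exists false.
exfalso.
have Ht : nz N true pt by exists yt.
have Hf : nz N false pf by exists yf.
have Hpt := nz_in Hd Ht.
have Hpf := nz_in Hd Hf.
case: HI => _ _ /(_ pt pf (set_mem Hpt) (set_mem Hpf)) [s [Hs Hpath Hlast]].
have := nz_path Hd _ Hpt Hs Hpath Ht; rewrite Hlast => Hft.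
exact: (nz_notboth Hd Hft Hf).
Qed.

Unset Implicit Arguments.

Theorem proposition2p18 (K : fieldType) (R : realType) (dsp : Order.disp_t)
    (P : porderType dsp) (Lam : R -> P -> P) (HLam : R_action Lam)
    (V W : pmod K dsp P) (HV : is_pmod V) (HW : is_pmod W)
    (A B : eqType) (I : A -> set P) (J : B -> set P)
    (HI : forall a, is_interval (I a)) (HJ : forall b, is_interval (J b))
    (iotaV : forall a p, pm_sp (interval_mod (K:=K) (I a)) p -> pm_sp V p)
    (iotaW : forall b p, pm_sp (interval_mod (K:=K) (J b)) p -> pm_sp W p)
    (HdV : decomposition V (fun a => interval_mod (K:=K) (I a)) iotaV)
    (HdW : decomposition W (fun b => interval_mod (K:=K) (J b)) iotaW) :
  (forall (e : R) (sigma : A -> option B), 0 <= e ->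
     matching (K:=K) Lam e I J sigma ->
     bottleneck_interleaving Lam e (fun a => interval_mod (K:=K) (I a))
                                   (fun b => interval_mod (K:=K) (J b)) sigma)
  /\ (d_BI Lam V W <= d_B (K:=K) Lam I J)%E.
Proof.
have P1 : forall (e : R) (sigma : A -> option B), 0 <= e ->
     matching (K:=K) Lam e I J sigma ->
     bottleneck_interleaving Lam e (fun a => interval_mod (K:=K) (I a))
                                   (fun b => interval_mod (K:=K) (J b)) sigma.
  move=> e sigma He [Hinj Hna Hnb Hm]; split => //.
  move=> a b /Hm [s1 s2]; exact: (interval_interleaved K HLam He (HI a) (HJ b) s1 s2).
split => //.
apply: ereal_inf_le_tmp => x [e [He -> [sigma Hs]]].
exists e; split => //.
exists A, B, (fun a => interval_mod (K:=K) (I a)), (fun b => interval_mod (K:=K) (J b)).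
exists iotaV, iotaW, sigma; split.
- split => // a; [exact: interval_is_pmod | exact: interval_indec].
- split => // b; [exact: interval_is_pmod | exact: interval_indec].
- exact: P1.
Qed.
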